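(* $\inf S = 1$, where $S$ is the set of $\beta>1$ with $S_\beta^+ = S_\beta^-$ (notation as in the context).
   Context: For $\beta>1$ let $f_\beta\colon[0,1]\to[0,1)$, $f_\beta(x)=\beta x \bmod 1$, and for $x\in[0,1]$ let $d(x,\beta)=(d_k(x,\beta))_{k\ge1}$ with $d_k(x,\beta)=\lfloor \beta f_\beta^{k-1}(x)\rfloor$. Let $S_\beta^+$ be the closure, in the product topology on $\{0,1,\dots,\lfloor\beta\rfloor\}^{\mathbb N}$, of $\{d(x,\beta): x\in[0,1)\}$. Let $S_\beta$ be the set of bi-infinite sequences $(\ldots,a_{-1},a_0,a_1,\ldots)$ such that $(a_n,a_{n+1},\ldots)\in S_\beta^+$ for every $n\in\mathbb Z$. Let $S_\beta^-$ be the set of one-sided sequences $(b_1,b_2,\ldots)$ such that the bi-infinite sequence $(\ldots,b_2,b_1,0,0,\ldots)$ (with $b_1$ at position $0$, $b_2$ at position $-1$, etc., and zeros at positions $1,2,\dots$) belongs to $S_\beta$; equivalently, there exists $(a_1,a_2,\ldots)\in S_\beta^+$ with $(\ldots,b_2,b_1,a_1,a_2,\ldots)\in S_\beta$. Define $S=\{\beta>1 : S_\beta^+=S_\beta^-\}$. *)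

(* Defs.v *)
From Stdlib Require Import Reals ZArith.
Open Scope R_scope.

(* floor of a real number (Int_part y = up y - 1 = floor y) *)
Definition rfloor (y : R) : Z := Int_part y.

Definition fbeta (beta x : R) : R := beta * x - IZR (rfloor (beta * x)).

Fixpoint fbeta_iter (beta : R) (n : nat) (x : R) : R :=
  match n with
  | O => x
  | S m => fbeta beta (fbeta_iter beta m x)
  end.

(* digit sequence d(x,beta), shifted to start at index 0:
   digit beta x k = d_{k+1}(x,beta) = floor(beta * f_beta^k(x)) *)
Definition digit (beta x : R) (k : nat) : nat :=
  Z.to_nat (rfloor (beta * fbeta_iter beta k x)).

(* S_beta^+ : closure of {d(x,beta) : x in [0,1)} in the product topology.
   A sequence lies in the closure iff every basic cylinder neighbourhood
   (fixing the first n coordinates) meets the set. *)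
Definition Splus (beta : R) (s : nat -> nat) : Prop :=
  forall n : nat, exists x : R, 0 <= x < 1 /\
    forall k : nat, (k < n)%nat -> digit beta x k = s k.

Definition Sbi (beta : R) (a : Z -> nat) : Prop :=
  forall n : Z, Splus beta (fun k : nat => a (n + Z.of_nat k)%Z).

(* the bi-infinite sequence (..., b_2, b_1, 0, 0, ...) with b_1 at position 0;
   b is indexed from 0, so b 0 = b_1 *)
Definition left_embed (b : nat -> nat) : Z -> nat :=
  fun z => if Z.leb z 0 then b (Z.to_nat (- z)) else O.

Definition Sminus (beta : R) (b : nat -> nat) : Prop :=
  Sbi beta (left_embed b).

Definition Sset (beta : R) : Prop :=
  1 < beta /\ (forall s : nat -> nat, Splus beta s <-> Sminus beta s).

Definition is_lower_bound (E : R -> Prop) (m : R) : Prop :=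
  forall x, E x -> m <= x.
Definition is_inf (E : R -> Prop) (m : R) : Prop :=
  is_lower_bound E m /\ (forall b, is_lower_bound E b -> b <= m).

(* Main.v *)
Require Import Defs.
From Stdlib Require Import Reals Lra Lia ZArith FunctionalExtensionality.
Open Scope R_scope.

Definition G (m : nat) (s : nat -> nat) : Prop :=
  (forall k, (s k <= 1)%nat) /\
  (forall k j, s k = 1%nat -> (1 <= j <= m)%nat -> s (k + j)%nat = 0%nat).

Lemma rfloor_eq (z : Z) (r : R) : 0 <= r < 1 -> rfloor (IZR z + r) = z.
Proof.
  intros Hr. unfold rfloor. destruct (base_Int_part (IZR z + r)) as [H1 H2].
  set (I := Int_part (IZR z + r)) in *.
  assert (A : (I < z + 1)%Z) by (apply lt_IZR; rewrite plus_IZR; simpl; lra).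
  assert (B : (z < I + 1)%Z) by (apply lt_IZR; rewrite plus_IZR; simpl; lra).
  lia.
Qed.

Lemma step (beta y : R) : 1 < beta < 2 -> 0 <= y < 1 ->
  (beta * y < 1 /\ rfloor (beta * y) = 0%Z /\ fbeta beta y = beta * y /\ 0 <= beta*y) \/
  (1 <= beta * y /\ rfloor (beta * y) = 1%Z /\ fbeta beta y = beta * y - 1 /\ beta * y < 2).
Proof.
  intros Hb Hy. destruct (Rlt_le_dec (beta * y) 1) as [H|H].
  - left. assert (E : rfloor (beta * y) = 0%Z).
    { replace (beta * y) with (IZR 0 + beta * y) by (simpl; ring). apply rfloor_eq. split; nra. }
    unfold fbeta. rewrite E. simpl. repeat split; try ring; nra.
  - right. assert (E : rfloor (beta * y) = 1%Z).
    { replace (beta * y) with (IZR 1 + (beta * y - 1)) by (simpl; ring). apply rfloor_eq. split; nra. }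
    unfold fbeta. rewrite E. simpl. repeat split; try ring; nra.
Qed.

Lemma iter_range beta x : 1 < beta < 2 -> 0 <= x < 1 ->
  forall k, 0 <= fbeta_iter beta k x < 1.
Proof.
  intros Hb Hx k; induction k; simpl; auto.
  destruct (step beta (fbeta_iter beta k x) Hb IHk) as [(?&?&->&?)|(?&?&->&?)]; lra.
Qed.

Lemma iter_zero beta y p : 1 < beta -> 0 <= y -> y * beta ^ p < 1 ->
  forall j, (j <= p)%nat -> fbeta_iter beta j y = beta ^ j * y.
Proof.
  intros Hb Hy Hp j; induction j; intros Hj; simpl.
  - ring.
  - rewrite IHj by lia.
    assert (Hle : beta ^ S j <= beta ^ p) by (apply Rle_pow; [lra|lia]).
    assert (0 <= beta ^ j) by (apply pow_le; lra).
    assert (E : rfloor (beta * (beta ^ j * y)) = 0%Z).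
    { replace (beta * (beta ^ j * y)) with (IZR 0 + beta ^ S j * y) by (simpl; ring).
      assert (beta ^ S j * y <= beta ^ p * y) by (apply Rmult_le_compat_r; lra).
      apply rfloor_eq. split; [apply Rmult_le_pos; [apply pow_le; lra | lra] | lra]. }
    unfold fbeta. rewrite E. simpl. ring.
Qed.

Lemma digit_bound beta m x : 1 < beta < 2 -> beta ^ S m = beta ^ m + 1 -> 0 <= x < 1 ->
  G m (digit beta x).
Proof.
  intros Hb Hm Hx. split.
  - intros k. unfold digit.
    destruct (step beta _ Hb (iter_range beta x Hb Hx k)) as [(_&->&_)|(_&->&_)]; simpl; lia.
  - intros k j Hk Hj. unfold digit in *.
    destruct (step beta _ Hb (iter_range beta x Hb Hx k)) as [(_&E&_)|(H1&E&F&H2)];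
      rewrite E in Hk; simpl in Hk; try lia.
    set (y := fbeta_iter beta (S k) x).
    assert (Hy : y = beta * fbeta_iter beta k x - 1) by (unfold y; simpl; exact F).
    assert (Hpm : 0 < beta ^ m) by (apply pow_lt; lra).
    assert (Hyb : y * beta ^ m < 1).
    { assert (y < beta - 1).
      { rewrite Hy. pose proof (iter_range beta x Hb Hx k). nra. }
      simpl in Hm. nra. }
    assert (Hy0 : 0 <= y) by lra.
    assert (Hit : forall i, fbeta_iter beta (i + S k) x = fbeta_iter beta i y).
    { induction i; simpl; [reflexivity| rewrite IHi; reflexivity]. }
    replace (k + j)%nat with ((j - 1) + S k)%nat by lia. rewrite Hit.
    rewrite (iter_zero beta y m) by (lra || lia).
    assert (Hle : beta ^ S (j-1) <= beta ^ m) by (apply Rle_pow; [lra|lia]).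
    assert (0 <= beta ^ (j-1)) by (apply pow_le; lra).
    replace (beta * (beta ^ (j - 1) * y)) with (IZR 0 + beta ^ S (j-1) * y) by (simpl; ring).
    assert (beta ^ S (j-1) * y <= beta ^ m * y) by (apply Rmult_le_compat_r; lra).
    rewrite rfloor_eq; [reflexivity|]. split; [apply Rmult_le_pos; [apply pow_le; lra | lra] | lra].
Qed.

Definition sh (t : nat -> nat) : nat -> nat := fun k => t (S k).

Fixpoint Y (beta : R) (t : nat -> nat) (L : nat) : R :=
  match L with
  | O => 0
  | S L' => (INR (t O) + Y beta (sh t) L') / beta
  end.

Lemma G_sh m t : G m t -> G m (sh t).
Proof.
  intros [H1 H2]; split; unfold sh; auto.
  intros k j Hk Hj. replace (S (k + j)) with (S k + j)%nat by lia. auto.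
Qed.

Lemma Y_nonneg beta t L : 1 < beta -> 0 <= Y beta t L.
Proof.
  intros Hb; revert t; induction L; intros t; simpl; [lra|].
  pose proof (pos_INR (t O)). pose proof (IHL (sh t)).
  apply Rmult_le_pos; [lra|]. left; apply Rinv_0_lt_compat; lra.
Qed.

Lemma Y_bound beta m : 1 < beta < 2 -> beta ^ S m = beta ^ m + 1 ->
  forall L t p, G m t -> (forall k, (k < p)%nat -> t k = 0%nat) -> Y beta t L * beta ^ p < 1.
Proof.
  intros Hb Hm L; induction L; intros t p HG Hz; simpl.
  - lra.
  - assert (Hbi : / beta * beta = 1) by (field; lra).
    destruct p as [|p].
    + simpl. rewrite Rmult_1_r. pose proof HG as [H1 H2].
      assert (t O = 0%nat \/ t O = 1%nat) as [E|E] by (specialize (H1 O); lia); rewrite E.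
      * pose proof (IHL (sh t) 0%nat (G_sh _ _ HG) ltac:(intros; lia)). simpl in H.
        pose proof (Y_nonneg beta (sh t) L ltac:(lra)). simpl.
        apply (Rmult_lt_reg_r beta); [lra|]. unfold Rdiv.
        replace ((0 + Y beta (sh t) L) * / beta * beta) with (Y beta (sh t) L) by (field; lra).
        lra.
      * assert (Hz' : forall k, (k < m)%nat -> sh t k = 0%nat).
        { intros k Hk. unfold sh. replace (S k) with (0 + S k)%nat by lia. apply H2; [exact E|lia]. }
        pose proof (IHL (sh t) m (G_sh _ _ HG) Hz').
        assert (Hpm : 0 < beta ^ m) by (apply pow_lt; lra).
        simpl in Hm |- *.
        apply (Rmult_lt_reg_r (beta * beta ^ m)); [nra|]. unfold Rdiv.
        replace ((1 + Y beta (sh t) L) * / beta * (beta * beta ^ m))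
          with (beta ^ m + Y beta (sh t) L * beta ^ m) by (field; lra).
        nra.
    + assert (E : t O = 0%nat) by (apply Hz; lia). rewrite E.
      assert (Hz' : forall k, (k < p)%nat -> sh t k = 0%nat) by (intros k Hk; unfold sh; apply Hz; lia).
      pose proof (IHL (sh t) p (G_sh _ _ HG) Hz'). simpl.
      replace ((0 + Y beta (sh t) L) / beta * (beta * beta ^ p)) with (Y beta (sh t) L * beta ^ p)
        by (field; lra). exact H.
Qed.

Lemma Y_step beta m t L : 1 < beta < 2 -> beta ^ S m = beta ^ m + 1 -> G m t ->
  rfloor (beta * Y beta t (S L)) = Z.of_nat (t O) /\ fbeta beta (Y beta t (S L)) = Y beta (sh t) L.
Proof.
  intros Hb Hm HG.
  assert (E : beta * Y beta t (S L) = IZR (Z.of_nat (t O)) + Y beta (sh t) L).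
  { simpl. rewrite <- INR_IZR_INZ. field. lra. }
  pose proof (Y_bound beta m Hb Hm L (sh t) 0 (G_sh _ _ HG) ltac:(intros; lia)). simpl in H.
  pose proof (Y_nonneg beta (sh t) L ltac:(lra)).
  assert (F : rfloor (beta * Y beta t (S L)) = Z.of_nat (t O)) by (rewrite E; apply rfloor_eq; lra).
  split; [exact F|]. unfold fbeta. rewrite F, E. ring.
Qed.

Definition shn (k : nat) (t : nat -> nat) : nat -> nat := fun j => t (k + j)%nat.

Lemma Y_iter beta m t : 1 < beta < 2 -> beta ^ S m = beta ^ m + 1 -> G m t ->
  forall k L, fbeta_iter beta k (Y beta t (k + L)) = Y beta (shn k t) L.
Proof.
  intros Hb Hm HG k; induction k; intros L.
  - simpl. f_equal.
  - replace (S k + L)%nat with (k + S L)%nat by lia. cbn [fbeta_iter]. rewrite IHk.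
    assert (HG' : G m (shn k t)).
    { destruct HG as [H1 H2]; split; unfold shn; auto.
      intros a j Ha Hj. replace (k + (a + j))%nat with ((k + a) + j)%nat by lia. auto. }
    destruct (Y_step beta m (shn k t) L Hb Hm HG') as [_ F]. rewrite F.
    f_equal. unfold sh, shn. apply functional_extensionality; intros; f_equal; lia.
Qed.

Lemma Splus_iff beta m s : 1 < beta < 2 -> beta ^ S m = beta ^ m + 1 ->
  (Splus beta s <-> G m s).
Proof.
  intros Hb Hm. split.
  - intros HS. split.
    + intros k. destruct (HS (S k)) as [x [Hx Hd]].
      rewrite <- (Hd k) by lia. apply (digit_bound beta m x Hb Hm Hx).
    + intros k j Hk Hj. destruct (HS (S (k + j))) as [x [Hx Hd]].
      rewrite <- (Hd (k+j)%nat) by lia. rewrite <- (Hd k) in Hk by lia.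
      apply (digit_bound beta m x Hb Hm Hx); auto.
  - intros HG n. exists (Y beta s n). split.
    + split; [apply Y_nonneg; lra|].
      pose proof (Y_bound beta m Hb Hm n s 0 HG ltac:(intros; lia)). simpl in H. lra.
    + intros k Hk. unfold digit.
      replace n with (k + S (n - S k))%nat by lia.
      rewrite (Y_iter beta m s Hb Hm HG k).
      assert (HG' : G m (shn k s)).
      { destruct HG as [H1 H2]; split; unfold shn; auto.
        intros a j Ha Hj. replace (k + (a + j))%nat with ((k + a) + j)%nat by lia. auto. }
      destruct (Y_step beta m (shn k s) (n - S k) Hb Hm HG') as [F _]. rewrite F.
      rewrite Nat2Z.id. unfold shn. f_equal; lia.
Qed.

Lemma Sminus_iff beta m b : 1 < beta < 2 -> beta ^ S m = beta ^ m + 1 ->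
  (Sminus beta b <-> G m b).
Proof.
  intros Hb Hm. unfold Sminus, Sbi. split.
  - intros HS. assert (HG : forall n, G m (fun k => left_embed b (n + Z.of_nat k))).
    { intros n. apply (Splus_iff beta m); auto. }
    assert (Hb1 : forall k, (b k <= 1)%nat).
    { intros k. destruct (HG (- Z.of_nat k)%Z) as [H1 _]. specialize (H1 O).
      unfold left_embed in H1. simpl in H1.
      replace (- Z.of_nat k + 0)%Z with (- Z.of_nat k)%Z in H1 by lia.
      destruct (Z.leb_spec (- Z.of_nat k) 0); [|lia].
      replace (Z.to_nat (- - Z.of_nat k)) with k in H1 by lia. exact H1. }
    split; [exact Hb1|].
    intros k j Hk Hj.
    destruct (HG (- Z.of_nat (k + j))%Z) as [_ H2]. specialize (H2 O j).
    unfold left_embed in H2. simpl in H2.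
    replace (- Z.of_nat (k + j) + 0)%Z with (- Z.of_nat (k + j))%Z in H2 by lia.
    replace (- Z.of_nat (k + j) + Z.of_nat j)%Z with (- Z.of_nat k)%Z in H2 by lia.
    destruct (Z.leb_spec (- Z.of_nat (k + j)) 0); [|lia].
    destruct (Z.leb_spec (- Z.of_nat k) 0); [|lia].
    replace (Z.to_nat (- - Z.of_nat (k + j))) with (k + j)%nat in H2 by lia.
    replace (Z.to_nat (- - Z.of_nat k)) with k in H2 by lia.
    specialize (Hb1 (k + j)%nat).
    destruct (Nat.eq_dec (b (k + j)%nat) 1) as [E|E]; [|lia].
    specialize (H2 E Hj). lia.
  - intros [H1 H2] n. apply (Splus_iff beta m); auto. split.
    + intros k. unfold left_embed. destruct (Z.leb _ _); auto.
    + intros k j Hk Hj. unfold left_embed in *.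
      destruct (Z.leb_spec (n + Z.of_nat k) 0); [|lia].
      rewrite Nat2Z.inj_add. rewrite Z.add_assoc.
      destruct (Z.leb_spec (n + Z.of_nat k + Z.of_nat j) 0); [|reflexivity].
      set (q := Z.to_nat (- (n + Z.of_nat k + Z.of_nat j))).
      assert (Eq : Z.to_nat (- (n + Z.of_nat k)) = (q + j)%nat) by (unfold q; lia).
      rewrite Eq in Hk. specialize (H1 q).
      destruct (Nat.eq_dec (b q) 1) as [E|E]; [|lia].
      rewrite (H2 q j E Hj) in Hk. discriminate.
Qed.

Lemma bern (h : R) (n : nat) : 0 <= h -> 1 + INR n * h <= (1 + h) ^ n.
Proof.
  intros Hh; induction n; [simpl; lra|]. cbn [pow].
  rewrite S_INR. pose proof (pos_INR n).
  assert (1 <= (1 + h) ^ n) by (apply pow_R1_Rle; lra). nra.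
Qed.

Lemma exists_beta (m : nat) : (1 <= m)%nat ->
  exists beta, 1 < beta < 2 /\ beta ^ S m = beta ^ m + 1.
Proof.
  intros Hm.
  destruct (IVT (fun x => x ^ S m - x ^ m - 1) 1 2) as [z [Hz Ez]].
  - reg.
  - lra.
  - rewrite !pow1. lra.
  - simpl. assert (2 <= 2 ^ m).
    { replace 2 with (2 ^ 1) at 1 by ring. apply Rle_pow; [lra|lia]. } lra.
  - exists z. assert (z <> 1) by (intro; subst; rewrite !pow1 in Ez; lra).
    assert (z <> 2).
    { intro; subst. simpl in Ez.
      assert (2 <= 2 ^ m) by (replace 2 with (2 ^ 1) at 1 by ring; apply Rle_pow; [lra|lia]). lra. }
    split; [lra|lra].
Qed.

Theorem proposition3p2 : is_inf Sset 1.
Proof.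
  split.
  - intros x [Hx _]. lra.
  - intros b Hlb. destruct (Rle_lt_dec b 1) as [H|H]; [exact H|exfalso].
    set (e := b - 1).
    destruct (archimed (/ (e * e))) as [Ha _].
    set (m := S (Z.to_nat (up (/ (e * e))))).
    assert (Hm1 : (1 <= m)%nat) by (unfold m; lia).
    assert (Hmr : / (e * e) < INR m).
    { unfold m. rewrite S_INR. destruct (Z_le_gt_dec 0 (up (/ (e*e)))).
      - rewrite INR_IZR_INZ, Z2Nat.id by lia. lra.
      - assert (0 < / (e*e)) by (apply Rinv_0_lt_compat; unfold e; nra).
        assert (IZR (up (/ (e*e))) <= 0) by (apply IZR_le; lia). lra. }
    destruct (exists_beta m Hm1) as [beta [Hb Hbm]].
    assert (HS : Sset beta).
    { split; [lra|]. intros s. rewrite (Splus_iff beta m s Hb Hbm), (Sminus_iff beta m s Hb Hbm). tauto. }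
    specialize (Hlb beta HS).
    pose proof (bern (beta - 1) m ltac:(lra)).
    replace (1 + (beta - 1)) with beta in H0 by ring.
    change (beta ^ S m) with (beta * beta ^ m) in Hbm.
    assert (He0 : 0 < e) by (unfold e; lra). assert (Hee : 0 < e * e) by (apply Rmult_lt_0_compat; lra).
    assert (1 < INR m * (e * e)).
    { apply (Rmult_lt_reg_l (/ (e*e))). apply Rinv_0_lt_compat; lra.
      rewrite Rmult_1_r. replace (/ (e * e) * (INR m * (e * e))) with (INR m) by (field; lra). lra. }
    assert (Hm : 0 <= INR m) by apply pos_INR.
    assert (beta ^ m * (beta - 1) = 1) by (replace (beta ^ m * (beta - 1)) with (beta * beta ^ m - beta ^ m) by ring; lra).
    assert (e <= beta - 1) by (unfold e; lra).
    assert (INR m * e * e <= INR m * (beta - 1) * (beta - 1)).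
    { apply Rmult_le_compat; try nra. }
    assert (INR m * (beta - 1) * (beta - 1) <= beta ^ m * (beta - 1)).
    { apply Rmult_le_compat_r; lra. }
    lra.
Qed.
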